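(* Let $Q=M_{12}$, $S=Q^4$, and let $A_1,A_2,A_3,A_4\leq Q$ with each $A_i\cong M_{11}$. Let $\psi:A_2\to A_3$ be an isomorphism and define the subgroups $X=\{(p,p,q,q)\mid p,q\in Q\}$ and $Y=\{(a_1,a_2,a_2\psi,a_4)\mid a_1\in A_1,a_2\in A_2,a_4\in A_4\}$ of $S$. Then $S\neq XY$. *)

(* Defs.v *)
From HB Require Import structures.
From mathcomp Require Import all_boot all_order all_fingroup all_solvable.
Set Implicit Arguments. Unset Strict Implicit. Unset Printing Implicit Defensive.

(* Permutations of 'I_12 given by their list of images (points 0..11,
   i.e. GAP's points 1..12 shifted by -1). *)
Definition perm_fun (s : seq nat) (i : 'I_12) : 'I_12 := inord (nth 0%N s i).

Definition l_a := [:: 1; 2; 3; 4; 5; 6; 7; 8; 9; 10; 0; 11]%N.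
Definition l_b := [:: 0; 1; 6; 9; 5; 3; 10; 2; 8; 4; 7; 11]%N.
Definition l_c := [:: 11; 10; 5; 7; 8; 2; 9; 3; 4; 6; 1; 0]%N.

Lemma perm_fun_inj s : size s = 12 -> all (fun k => k < 12) s -> uniq s ->
  injective (perm_fun s).
Proof.
move=> Hs Ha Hu i j; rewrite /perm_fun => /(congr1 val).
have Hn (k : 'I_12) : nth 0 s k < 12.
  by apply: (allP Ha); apply: mem_nth; rewrite Hs.
rewrite /= !inordK ?Hn // => /eqP; rewrite nth_uniq ?Hs // => /eqP; exact: val_inj.
Qed.

Lemma inj_a : injective (perm_fun l_a). Proof. exact: perm_fun_inj. Qed.
Lemma inj_b : injective (perm_fun l_b). Proof. exact: perm_fun_inj. Qed.
Lemma inj_c : injective (perm_fun l_c). Proof. exact: perm_fun_inj. Qed.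

(* GAP generators: a = (1,...,11), b = (3,7,11,8)(4,10,5,6),
   c = (1,12)(2,11)(3,6)(4,8)(5,9)(7,10). *)
Definition gen_a : 'S_12 := perm inj_a.
Definition gen_b : 'S_12 := perm inj_b.
Definition gen_c : 'S_12 := perm inj_c.

(* MathieuGroup(12) and MathieuGroup(11) as in GAP. *)
Local Open Scope group_scope.
Definition M12 : {group 'S_12} := <<[set gen_a; gen_b; gen_c]>>%G.
Definition M11 : {group 'S_12} := <<[set gen_a; gen_b]>>%G.

(* Main.v *)
Require Import Defs.
From Stdlib Require Import MSetPositive NArith Lia.
From HB Require Import structures.
From mathcomp Require Import all_boot all_order all_fingroup all_solvable zify.
Set Implicit Arguments. Unset Strict Implicit. Unset Printing Implicit Defensive.
Local Open Scope group_scope.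

Definition lcomp (s t : seq nat) := map (fun i => nth 0%N t i) s.
Definition valid (s : seq nat) := [&& size s == 12, all (fun k => k < 12) s & uniq s].
Definition tp (s : seq nat) : 'S_12 := insubd (1 : 'S_12) [ffun i => perm_fun s i].

Lemma valid_inj s : valid s -> injective (perm_fun s).
Proof. by case/and3P=> /eqP h1 h2 h3; apply: perm_fun_inj. Qed.

Lemma nth_lt s i : valid s -> i < 12 -> nth 0 s i < 12.
Proof. by case/and3P=> /eqP h1 /allP h2 _ hi; apply: h2; apply: mem_nth; rewrite h1. Qed.

Lemma tpE s : valid s -> forall i, tp s i = perm_fun s i.
Proof.
move=> v i; rewrite -pvalE.
have inj : injectiveb [ffun i => perm_fun s i].
  by apply/injectiveP => x y; rewrite !ffunE; apply: valid_inj.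
by rewrite /tp; change (val (insubd (1 : 'S_12) [ffun i => perm_fun s i]) i = perm_fun s i);
  rewrite insubdK // ffunE.
Qed.

Lemma tp_val s (i : 'I_12) : valid s -> val (tp s i) = nth 0 s i.
Proof. move=> v; rewrite tpE // /perm_fun; apply: inordK; exact: (nth_lt v (ltn_ord i)). Qed.

Lemma lcomp_valid s t : valid s -> valid t -> valid (lcomp s t).
Proof.
move=> vs vt; have /and3P[/eqP ss /allP as' us] := vs.
have /and3P[/eqP st /allP at' ut] := vt.
apply/and3P; split.
- by rewrite size_map ss.
- apply/allP => y /mapP[i hi ->]; apply: (nth_lt vt); exact: as'.
- rewrite map_inj_in_uniq // => i j hi hj /eqP; rewrite nth_uniq ?st ?as' //.
  by move/eqP.
Qed.

Lemma nth_lcomp s t i : valid s -> i < 12 -> nth 0 (lcomp s t) i = nth 0 t (nth 0 s i).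
Proof. by case/and3P=> /eqP ss _ _ hi; rewrite (nth_map 0) // ss. Qed.

Lemma tp_lcomp s t : valid s -> valid t -> tp (lcomp s t) = tp s * tp t.
Proof.
move=> vs vt; apply/permP => i; apply: val_inj.
rewrite permM !tp_val ?lcomp_valid // nth_lcomp //.
Qed.

Lemma tp_inj s t : valid s -> valid t -> tp s = tp t -> s = t.
Proof.
move=> vs vt e; have /and3P[/eqP ss _ _] := vs; have /and3P[/eqP st _ _] := vt.
apply: (@eq_from_nth _ 0); first by rewrite ss st.
move=> i; rewrite ss => hi.
by rewrite -(tp_val (Ordinal hi) vs) -(tp_val (Ordinal hi) vt) e.
Qed.

Definition idl := iota 0 12.
Lemma valid_idl : valid idl. Proof. by []. Qed.
Lemma tp_idl : tp idl = 1.
Proof. by apply/permP => i; apply: val_inj; rewrite tp_val // perm1 nth_iota. Qed.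

Definition keyN (s : seq nat) : N :=
  foldr (fun a c => N.add (N.of_nat a) (N.mul 12%num c)) 0%num s.
Definition key (s : seq nat) : positive := N.succ_pos (keyN s).

Lemma key_inj s t : size s = size t -> all (fun k => k < 12) s -> all (fun k => k < 12) t ->
  key s = key t -> s = t.
Proof.
move=> e hs ht /(f_equal Npos); rewrite /key !N.succ_pos_spec => /N.succ_inj.
elim: s t e hs ht => [|a s IH] [|b t] // e hs ht h.
have e' : size s = size t by case: e.
move: hs ht => /andP[ha hs] /andP[hb ht].
have h' : (N.of_nat a + 12 * keyN s = N.of_nat b + 12 * keyN t)%num := h.
have [hab hst] : a = b /\ keyN s = keyN t.
  move/ltP: ha => ha; move/ltP: hb => hb.
  have hab : a = b by lia.
  by split => //; subst; lia.
by rewrite hab (IH t).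
Qed.

Lemma setof_gen (L : seq (seq nat)) S k : PositiveSet.In k
   (foldl (fun S x => PositiveSet.add (key x) S) S L) <->
   PositiveSet.In k S \/ exists2 x, x \in L & key x = k.
Proof.
elim: L S => [|x L IH] S /=.
  by split; [left| case=> // [][]].
rewrite IH PositiveSet.add_spec; split.
- case=> [[->|h]|[y hy <-]]; [right; exists x| left | right; exists y] => //.
  + by rewrite inE eqxx.
  + by rewrite inE hy orbT.
- case=> [h|[y]]; first by left; right.
  rewrite inE => /orP[/eqP->|hy] <-; first by left; left.
  by right; exists y.
Qed.

Definition setof (L : seq (seq nat)) :=
  foldl (fun S x => PositiveSet.add (key x) S) PositiveSet.empty L.

Lemma setofP L k : PositiveSet.In k (setof L) <-> exists2 x, x \in L & key x = k.
Proof.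
rewrite /setof setof_gen; split; last by right.
by case=> // /PositiveSet.empty_spec.
Qed.

Fixpoint nodupk (L : seq (seq nat)) S := if L is x :: l then
  if PositiveSet.mem (key x) S then false else nodupk l (PositiveSet.add (key x) S) else true.

Lemma nodupkP L S : nodupk L S -> uniq L /\ forall x, x \in L -> ~ PositiveSet.In (key x) S.
Proof.
elim: L S => [|x L IH] S //=.
case hm: (PositiveSet.mem (key x) S) => // /IH [uL hL]; split.
- rewrite uL andbT; apply/negP => hx; apply: (hL x hx).
  by apply/PositiveSet.add_spec; left.
- move=> y; rewrite inE => /orP[/eqP->|hy] hin.
  + by move: hin; rewrite -PositiveSet.mem_spec hm.
  + by apply: (hL y hy); apply/PositiveSet.add_spec; right.
Qed.

Definition stepf x (acc2 : seq (seq nat) * PositiveSet.t) g :=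
  let y := lcomp x g in
  if PositiveSet.mem (key y) acc2.2 then acc2 else (y :: acc2.1, PositiveSet.add (key y) acc2.2).
Definition step (gens : seq (seq nat)) acc x := foldl (stepf x) acc gens.
Definition expand gens fr seen := foldl (step gens) ([::], seen) fr.

Fixpoint bfs gens (fuel : nat) fr seen acc :=
  match fuel with 0 => acc | S f =>
   let p := expand gens fr seen in
   if p.1 is [::] then acc else bfs gens f p.1 p.2 (catrev p.1 acc) end.

Fixpoint search gens (ok : pred (seq nat)) (fuel : nat) fr seen : bool :=
  if has ok fr then true else
  match fuel with 0 => false | S f =>
   let p := expand gens fr seen in search gens ok f p.1 p.2 end.

Lemma expand_sound (P : seq nat -> Prop) gens
  (hP : forall x g, P x -> g \in gens -> P (lcomp x g)) fr seen :
  (forall y, y \in fr -> P y) -> forall y, y \in (expand gens fr seen).1 -> P y.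
Proof.
rewrite /expand; move=> hfr.
have : forall y, y \in ([::], seen).1 -> P y by [].
elim: fr ([::], seen) hfr => [|x fr IH] acc //= hfr hacc.
apply: IH => [y hy|]; first by apply: hfr; rewrite inE hy orbT.
have hx : P x by apply: hfr; rewrite inE eqxx.
rewrite /step; have : {subset gens <= gens} by [].
elim: {1 3}gens acc hacc => [|g gs IHg] acc hacc //= hsub.
apply: IHg => [|y hy]; last by apply: hsub; rewrite inE hy orbT.
rewrite /stepf; case: ifP => // _ y; rewrite inE => /orP[/eqP->|]; last exact: hacc.
by apply: hP => //; apply: hsub; rewrite inE eqxx.
Qed.

Lemma bfs_sound (P : seq nat -> Prop) gens
  (hP : forall x g, P x -> g \in gens -> P (lcomp x g)) fuel fr seen acc :
  (forall y, y \in fr -> P y) -> (forall y, y \in acc -> P y) ->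
  forall y, y \in bfs gens fuel fr seen acc -> P y.
Proof.
elim: fuel fr seen acc => [|f IH] fr seen acc //= hfr hacc.
have := @expand_sound P gens hP fr seen hfr.
case: (expand gens fr seen) => l s2 /= hz.
case: l hz => [|z zs] hz //.
apply: IH => //.
by move=> y; rewrite catrevE mem_cat mem_rev => /orP[/hz|/hacc].
Qed.

Lemma search_sound (P : seq nat -> Prop) gens
  (hP : forall x g, P x -> g \in gens -> P (lcomp x g)) ok fuel fr seen :
  (forall y, y \in fr -> P y) -> search gens ok fuel fr seen ->
  exists y, P y /\ ok y.
Proof.
elim: fuel fr seen => [|f IH] fr seen /= hfr; case: hasP => [[y hy oky] _|_] //;
  try by exists y; split => //; apply: hfr.
by apply: IH; apply: expand_sound.
Qed.

Definition TL (L : seq (seq nat)) : {set 'S_12} := [set p | p \in map tp L].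
Definition closedL gens L := let S := setof L in
  all (fun x => all (fun g => PositiveSet.mem (key (lcomp x g)) S) gens) L.

Lemma closedP gens L x g : all valid gens -> all valid L -> closedL gens L ->
  x \in L -> g \in gens -> lcomp x g \in L.
Proof.
move=> /allP vg /allP vL /allP cl hx hg.
have /allP/(_ g hg)/PositiveSet.mem_spec/setofP[y hy ey] := cl x hx.
have vy := vL y hy; have vc := lcomp_valid (vL x hx) (vg g hg).
case/and3P: vy => /eqP s1 a1 _; case/and3P: vc => /eqP s2 a2 _.
by rewrite -(key_inj _ a1 a2 ey) // s1 s2.
Qed.

Lemma gen_sub_TL (A : {set 'S_12}) gens L : all valid gens -> all valid L ->
  closedL gens L -> idl \in L -> (forall a, a \in A -> exists2 g, g \in gens & a = tp g) ->
  <<A>> \subset TL L.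
Proof.
move=> vg vL cl hid hA.
pose G' := [set h | [forall x in TL L, x * h \in TL L]].
have gG : group_set G'.
  apply/andP; split; first by rewrite inE; apply/forall_inP => x hx; rewrite mulg1.
  apply/subsetP => h /mulsgP[h1 h2 i1 i2 ->].
  move: i1 i2; rewrite !inE => /forall_inP i1 /forall_inP i2.
  apply/forall_inP => x hx; rewrite mulgA; exact: i2 _ (i1 _ hx).
have sub : <<A>> \subset Group gG.
  rewrite gen_subG; apply/subsetP => a ha; rewrite inE; apply/forall_inP => x.
  rewrite inE => /mapP[y hy ->]; have [g hg ->] := hA a ha.
  have /allP vL' := vL; have /allP vg' := vg.
  rewrite -tp_lcomp; [|exact: vL'|exact: vg']; rewrite ?inE; apply: map_f; exact: (closedP vg vL cl hy hg).
apply/subsetP => h /(subsetP sub); rewrite inE => /forall_inP/(_ 1).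
rewrite mul1g; apply; rewrite inE -tp_idl; exact: map_f.
Qed.

Definition set1k s := PositiveSet.add (key s) PositiveSet.empty.
Definition enumg gens := bfs gens 30 [:: idl] (set1k idl) [:: idl].

Lemma enum_sound (A : {set 'S_12}) gens : all valid gens ->
  (forall g, g \in gens -> tp g \in A) ->
  forall y, y \in enumg gens -> valid y /\ tp y \in <<A>>.
Proof.
move=> /allP vg hA; apply: bfs_sound.
- move=> x g [vx hx] hg; split; first by apply: lcomp_valid => //; apply: vg.
  by rewrite tp_lcomp // ?vg // groupM // mem_gen // hA.
- by move=> y; rewrite inE => /eqP->; rewrite tp_idl group1.
- by move=> y; rewrite inE => /eqP->; rewrite tp_idl group1.
Qed.

Lemma TL_card L : all valid L -> uniq L -> #|TL L| = size L.
Proof.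
move=> /allP vL uL; rewrite cardsE -(size_map tp); apply/card_uniqP.
by rewrite map_inj_in_uniq // => x y hx hy; apply: tp_inj; apply: vL.
Qed.

Lemma gen_TL (A : {set 'S_12}) gens : all valid gens ->
  closedL gens (enumg gens) -> all valid (enumg gens) -> idl \in enumg gens ->
  (forall a, a \in A -> exists2 g, g \in gens & a = tp g) ->
  (forall g, g \in gens -> tp g \in A) -> <<A>> = TL (enumg gens).
Proof.
move=> vg cl vL hid h1 h2; apply/eqP; rewrite eqEsubset (gen_sub_TL vg vL cl hid h1).
apply/subsetP => p; rewrite inE => /mapP[y hy ->]; exact: (enum_sound vg h2 hy).2.
Qed.

Fixpoint len (s : seq (seq nat)) n := if s is _ :: s then len s (N.succ n) else n.
Lemma lenE s n : len s n = (n + N.of_nat (size s))%num.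
Proof. elim: s n => [|x s IH] n /=; first by rewrite N.add_0_r. rewrite IH; lia. Qed.

Notation L12 := (enumg [:: l_a; l_b; l_c]).
Notation L11 := (enumg [:: l_a; l_b]).
Fixpoint lpow s n := if n is k.+1 then lcomp (lpow s k) s else idl.
Definition pows := mkseq (lpow l_a) 11.
Definition inP0 y := has (fun p => p == y) pows.
Definition l_t := [:: 4; 5; 8; 3; 0; 1; 7; 6; 2; 9; 10; 11]%N.
Definition okc y := (y == l_t) || ((lpow y 8 == idl) && (lpow y 4 != idl)).
Definition certf x := (lpow x 11 != idl) || inP0 x || search [:: l_a; x] okc 12 [:: idl] (set1k idl).
Definition normf L := filter (fun g => has (fun p => lcomp l_a g == lcomp g p) pows) L.
Definition chk11 L := [&& all valid L, closedL [:: l_a; l_b] L, nodupk L PositiveSet.empty,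
  idl \in L, size L == 7920, all certf L & size (normf L) == 55].
Definition chk12 L := [&& all valid L, closedL [:: l_a; l_b; l_c] L, nodupk L PositiveSet.empty,
  idl \in L & len L 0%num == N.mul 12 (len L11 0%num)].
Lemma c11_all : chk11 L11. Proof. vm_cast_no_check (erefl true). Qed.
Lemma c12_all : chk12 L12. Proof. vm_cast_no_check (erefl true). Qed.
Global Opaque enumg.
Definition normlist := normf L11.
Lemma c11_split : [/\ all valid L11, closedL [:: l_a; l_b] L11, nodupk L11 PositiveSet.empty,
  idl \in L11 & [/\ size L11 = 7920, all certf L11 & size normlist = 55]].
Proof.
have := c11_all; rewrite /chk11.
case/andP => h1; case/andP => h2; case/andP => h3; case/andP => h4; case/andP => /eqP h5; case/andP => h6 /eqP h7.
split; [exact: h1 | exact: h2 | exact: h3 | exact: h4 | split; [exact: h5 | exact: h6 | exact: h7]].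
Qed.
Lemma c12_split : [/\ all valid L12, closedL [:: l_a; l_b; l_c] L12, nodupk L12 PositiveSet.empty,
  idl \in L12 & len L12 0%num = N.mul 12 (len L11 0%num)].
Proof.
have := c12_all; rewrite /chk12.
case/andP => h1; case/andP => h2; case/andP => h3; case/andP => h4 /eqP h5.
split; [exact: h1 | exact: h2 | exact: h3 | exact: h4 | exact: h5].
Qed.
Lemma c12_valid : all valid L12. Proof. by case: c12_split. Qed.
Lemma c12_closed : closedL [:: l_a; l_b; l_c] L12. Proof. by case: c12_split. Qed.
Lemma c12_nodup : nodupk L12 PositiveSet.empty. Proof. by case: c12_split. Qed.
Lemma c12_id : idl \in L12. Proof. by case: c12_split. Qed.
Lemma c12_len : len L12 0%num = N.mul 12 (len L11 0%num). Proof. by case: c12_split. Qed.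
Lemma c11_valid : all valid L11. Proof. by case: c11_split. Qed.
Lemma c11_closed : closedL [:: l_a; l_b] L11. Proof. by case: c11_split. Qed.
Lemma c11_nodup : nodupk L11 PositiveSet.empty. Proof. by case: c11_split. Qed.
Lemma c11_id : idl \in L11. Proof. by case: c11_split. Qed.
Lemma c11_size : size L11 = 7920. Proof. by case: c11_split => _ _ _ _ []. Qed.
Lemma c_cert : all certf L11. Proof. by case: c11_split => _ _ _ _ []. Qed.
Lemma c_norm : size normlist = 55. Proof. by case: c11_split => _ _ _ _ []. Qed.

Lemma gen_aE : gen_a = tp l_a. Proof. by apply/permP => i; rewrite permE tpE. Qed.
Lemma gen_bE : gen_b = tp l_b. Proof. by apply/permP => i; rewrite permE tpE. Qed.
Lemma gen_cE : gen_c = tp l_c. Proof. by apply/permP => i; rewrite permE tpE. Qed.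
Lemma M11E : M11 :=: TL L11.
Proof.
rewrite /M11 /=.
apply: (gen_TL (gens := [:: l_a; l_b])).
- by [].
- exact: c11_closed.
- exact: c11_valid.
- exact: c11_id.
- move=> a; rewrite !inE => /orP[] /eqP->;
   [exists l_a; rewrite ?gen_aE| exists l_b; rewrite ?gen_bE]; by rewrite ?inE ?eqxx ?orbT.
- move=> g; rewrite !inE => /orP[] /eqP->;
   by rewrite -?gen_aE -?gen_bE eqxx ?orbT.
Qed.

Lemma M12E : M12 :=: TL L12.
Proof.
rewrite /M12 /=; apply: (gen_TL (gens := [:: l_a; l_b; l_c])).
- by [].
- exact: c12_closed.
- exact: c12_valid.
- exact: c12_id.
- move=> a; rewrite !inE -orbA; case/or3P => /eqP ->.
  + by exists l_a; rewrite ?gen_aE ?inE ?eqxx.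
  + by exists l_b; rewrite ?gen_bE ?inE ?eqxx ?orbT.
  + by exists l_c; rewrite ?gen_cE ?inE ?eqxx ?orbT.
- move=> g; rewrite !inE -orbA; case/or3P => /eqP ->.
  + by rewrite -gen_aE eqxx.
  + by rewrite -gen_bE eqxx ?orbT.
  + by rewrite -gen_cE eqxx ?orbT.
Qed.

Lemma card_M11 : #|M11| = 7920.
Proof.
have [u _] := nodupkP c11_nodup.
rewrite M11E TL_card; [exact: c11_size | exact: c11_valid | exact: u].
Qed.

Lemma card_gen12 L1 L2 : all valid L1 -> all valid L2 -> nodupk L1 PositiveSet.empty ->
  nodupk L2 PositiveSet.empty -> len L2 0%num = N.mul 12 (len L1 0%num) ->
  #|TL L2| = (12 * #|TL L1|)%N.
Proof.
move=> v1 v2 /nodupkP[u1 _] /nodupkP[u2 _] e.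
rewrite !TL_card //; rewrite !lenE !N.add_0_l in e.
by apply: Nat2N.inj; rewrite e Nat2N.inj_mul.
Qed.

Lemma card_M12 : #|M12| = (12 * #|M11|)%N.
Proof.
rewrite M12E M11E; apply: card_gen12.
- exact: c11_valid.
- exact: c12_valid.
- exact: c11_nodup.
- exact: c12_nodup.
- exact: c12_len.
Qed.


Lemma valid_l_a : valid l_a. Proof. by []. Qed.

Lemma tp_lpow s n : valid s -> valid (lpow s n) /\ tp (lpow s n) = tp s ^+ n.
Proof.
move=> vs; elim: n => [|n [vn en]] /=; first by rewrite tp_idl expg0.
by split; [apply: lcomp_valid | rewrite tp_lcomp // en expgSr].
Qed.

Lemma gen_a11 : gen_a ^+ 11 = 1.
Proof. by rewrite gen_aE -(tp_lpow 11 valid_l_a).2 -tp_idl; congr tp. Qed.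

Lemma in_M11 x : x \in M11 -> exists2 z, z \in L11 & x = tp z.
Proof. by rewrite M11E inE => /mapP[z hz ->]; exists z. Qed.

Lemma valid_L11 z : z \in L11 -> valid z.
Proof. move=> hz; exact: (allP c11_valid z hz). Qed.

Lemma TL_card_le L : #|TL L| <= size L.
Proof. by rewrite cardsE -(size_map tp) card_size. Qed.

Lemma tp_eq s t : valid s -> valid t -> (tp s == tp t) = (s == t).
Proof.
move=> vs vt; apply/eqP/eqP => [|->] //; exact: tp_inj.
Qed.

Lemma exists_x11 (K : {group 'S_12}) : K \subset M11 -> gen_a \in K -> #|K| = 660 ->
  exists2 x, x \in K & (x ^+ 11 = 1) /\ x \notin <[gen_a]>.
Proof.
move=> sKM aK cK.
case: (boolP [exists x in K, (x ^+ 11 == 1) && (x \notin <[gen_a]>)]).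
  by case/exists_inP => x xK /andP[/eqP h1 h2]; exists x.
move/exists_inPn => hK; exfalso.
have : K \subset TL normlist.
  apply/subsetP => k kK.
  have := hK _ (groupJ aK kK); rewrite -conjXg gen_a11 conj1g eqxx /= negbK.
  case/cycleP => i ei.
  have [z hz ek] := in_M11 (subsetP sKM k kK).
  have vz := valid_L11 hz.
  rewrite -(expg_mod _ gen_a11) in ei.
  have hi : i %% 11 < 11 by rewrite ltn_mod.
  have [vp ep] := tp_lpow (i %% 11) valid_l_a.
  have e2 : lcomp l_a z = lcomp z (lpow l_a (i %% 11)).
    apply: tp_inj; [exact: lcomp_valid valid_l_a vz | exact: lcomp_valid vz vp |].
    rewrite (tp_lcomp valid_l_a vz) (tp_lcomp vz vp) ep -gen_aE -ek -ei /conjg !mulgA mulgV mul1g.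
    by [].
  have hn : z \in normlist.
    rewrite mem_filter hz andbT; apply/hasP; exists (lpow l_a (i %% 11)).
      rewrite /pows /mkseq; apply: map_f; rewrite mem_iota add0n leq0n; exact: hi.
    apply/eqP.
    exact: e2.
  rewrite inE; apply/mapP; exists z; [exact: hn | exact: ek].
move/subset_leq_card; rewrite cK => h.
have h2 := leq_trans h (TL_card_le normlist).
move: h2; rewrite c_norm. by [].
Qed.

Lemma t_in (K : {group 'S_12}) : K \subset M11 -> gen_a \in K -> #|K| = 660 -> tp l_t \in K.
Proof.
move=> sKM aK cK.
have [x xK [x11 xn]] := exists_x11 sKM aK cK.
have [z hz ex] := in_M11 (subsetP sKM x xK).
have vz := valid_L11 hz.
have hc : certf z := allP c_cert z hz.
clear hz.
have [vz11 ez11] := tp_lpow 11 vz.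
have h1 : (lpow z 11 != idl) = false.
  apply/negbF/eqP; apply: tp_inj; [exact: vz11 | exact: valid_idl |].
  by rewrite ez11 -ex x11 tp_idl.
have h2 : inP0 z = false.
  apply/negbTE/negP => /hasP[p].
  rewrite /pows /mkseq => /mapP[j _ ->] /eqP ej.
  move/negP: xn; apply; apply/cycleP; exists j.
  by rewrite ex -ej (tp_lpow j valid_l_a).2 gen_aE.
rewrite /certf h1 h2 !orFb in hc.
have hP : forall y g, (valid y /\ tp y \in K) -> g \in [:: l_a; z] -> (valid (lcomp y g) /\ tp (lcomp y g) \in K).
  move=> y g [vy ky]; rewrite !inE => /orP[] /eqP ->.
  - split; first exact: lcomp_valid vy valid_l_a.
    by rewrite (tp_lcomp vy valid_l_a) groupM // -gen_aE.
  - split; first exact: lcomp_valid vy vz.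
    by rewrite (tp_lcomp vy vz) groupM // -ex.
have hfr : forall y, y \in [:: idl] -> valid y /\ tp y \in K.
  move=> y; rewrite inE => /eqP ->; split; [exact: valid_idl | rewrite tp_idl; exact: group1].
have [y [[vy yK] oky]] := search_sound hP hfr hc.
case/orP: oky => [/eqP <- // | /andP[/eqP e8 e4]].
exfalso; move: e4; apply/negP; rewrite negbK.
have [v8 t8] := tp_lpow 8 vy; have [v4 t4] := tp_lpow 4 vy.
rewrite -tp_eq // t4 tp_idl -order_dvdn.
have d8 : #[tp y] %| 8 by rewrite order_dvdn -t8 e8 tp_idl.
have dK : #[tp y] %| 660 by rewrite -cK order_dvdG.
have h : #[tp y] %| gcdn 8 660 by rewrite dvdn_gcd d8 dK.
exact: h.
Qed.


Lemma ord11 (x : 'S_12) : x ^+ 11 = 1 -> x != 1 -> #[x] = 11.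
Proof.
move=> h1 h2; have d : #[x] %| 11 by rewrite order_dvdn h1.
have /primeP[_ hp] : prime 11 by [].
by case/pred2P: (hp _ d) => // /eqP; rewrite order_eq1 (negbTE h2).
Qed.

Lemma syl11 x : x \in M11 -> #[x] = 11 -> 11.-Sylow(M11) <[x]>%G.
Proof.
move=> xM ox; rewrite pHallE /= cycle_subG xM /= card_M11 p_part.
have -> : (11 ^ logn 11 7920 = 11)%N by [].
by apply/eqP; exact: ox.
Qed.

Lemma gen_a_ne1 : gen_a != 1.
Proof. by rewrite gen_aE -tp_idl tp_eq //; apply: valid_idl. Qed.

Lemma gen_a_M11 : gen_a \in M11.
Proof. by rewrite mem_gen // !inE eqxx. Qed.

Lemma M11_no_pair (H K : {group 'S_12}) : H \subset M11 -> K \subset M11 ->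
  #|H| = 660 -> #|K| = 660 -> #|H :&: K| = 55 -> False.
Proof.
move=> sH sK cH cK cHK.
have d11 : 11 %| #|(H :&: K)%G| by rewrite /= cHK.
have [y yHK oy] := Cauchy (isT : prime 11) d11.
have yM : y \in M11 by apply: (subsetP sH); move: yHK; rewrite inE => /andP[].
have [g gM eg] := Sylow_trans (syl11 gen_a_M11 (ord11 gen_a11 gen_a_ne1)) (syl11 yM oy).
have ag : gen_a ^ g \in H :&: K.
  apply: (subsetP (_ : <[y]> \subset H :&: K)); first by rewrite cycle_subG.
  have e' : <[y]> = <[gen_a]> :^ g by move: (congr1 val eg).
  by rewrite e' memJ_conjg cycle_id.
have sub' (L : {group 'S_12}) : L \subset M11 -> (L :^ g^-1)%G \subset M11.
  by move=> sL; rewrite /= sub_conjg invgK (conjGid gM).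
have mem' (L : {group 'S_12}) : gen_a ^ g \in L -> gen_a \in (L :^ g^-1)%G.
  by move=> h; rewrite /= mem_conjg invgK.
move: ag; rewrite inE => /andP[aH aK].
have tH := t_in (sub' _ sH) (mem' _ aH) (etrans (cardJg _ _) cH).
have tK := t_in (sub' _ sK) (mem' _ aK) (etrans (cardJg _ _) cK).
have tHK : tp l_t \in (H :&: K) :^ g^-1 by rewrite conjIg inE tH tK.
have d55 : #[tp l_t] %| 55.
  by rewrite -cHK -(cardJg _ g^-1) (order_dvdG (G := ((H :&: K) :^ g^-1)%G)).
have d2 : #[tp l_t] %| 2.
  have vt : valid l_t by [].
  by rewrite order_dvdn -(tp_lpow 2 vt).2 -tp_idl; apply/eqP; congr tp.
have h : #[tp l_t] %| gcdn 2 55 by rewrite dvdn_gcd d2 d55.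
move: h; rewrite order_dvdn expg1 -tp_idl tp_eq //; apply: valid_idl.
Qed.

Lemma canc m a b : 0 < m -> (m * a = 12 * m * b)%N -> a = (12 * b)%N.
Proof. by move=> hm; rewrite -mulnA mulnCA => /eqP; rewrite eqn_pmul2l // => /eqP. Qed.

Lemma div12 a b : (12 * a = 12 * b)%N -> a = b.
Proof. by move/eqP; rewrite eqn_pmul2l // => /eqP. Qed.

Theorem lemma2p5 (A1 A2 A3 A4 : {group 'S_12})
    (sA1 : A1 \subset M12) (sA2 : A2 \subset M12)
    (sA3 : A3 \subset M12) (sA4 : A4 \subset M12)
    (iA1 : A1 \isog M11) (iA2 : A2 \isog M11)
    (iA3 : A3 \isog M11) (iA4 : A4 \isog M11)
    (psi : {morphism A2 >-> 'S_12}) (ipsi : isom A2 A3 psi) :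
  let S := setX (setX M12 M12) (setX M12 M12) in
  let X := [set ((p, p), (q, q)) | p in M12, q in M12] in
  let Y := [set ((a.1.1, a.1.2), (psi a.1.2, a.2)) | a in setX (setX A1 A2) A4] in
  S != X * Y.
Proof.
cbv zeta.
set S := setX _ _; set X := [set _ | _ in _, _ in _]; set Y := [set _ | _ in _].
apply/negP => /eqP hS.
have dec : forall u, u \in S -> exists p q a1 a2 a4,
    [/\ a1 \in A1, a2 \in A2, a4 \in A4 &
     u = ((p * a1, p * a2), (q * psi a2, q * a4))].
  move=> u; rewrite hS => /mulsgP[x y hx hy ->].
  case/imset2P: hx => p q _ _ ->.
  case/imsetP: hy => a ha ->; move: ha; case: a => [[a1 a2] a4].
  rewrite !in_setX => /andP[/andP[h1 h2] h4].
  by exists p, q, a1, a2, a4.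
have inS1 g : g \in M12 -> ((1, g), (1, 1)) \in S.
  by move=> gM; rewrite /S !in_setX gM group1.
have inS2 g : g \in M12 -> ((1, 1), (1, g)) \in S.
  by move=> gM; rewrite /S !in_setX gM group1.
pose D := (A1 :&: A2)%G.
have mA : #|M11| = 7920 := card_M11.
have cA1 := card_isog iA1; have cA2 := card_isog iA2.
have cA3 := card_isog iA3; have cA4 := card_isog iA4.
have inj := isom_inj ipsi; have imA := isom_im ipsi.
have e12 : A1 * A2 = M12.
  apply/eqP; rewrite eqEsubset mul_subG //; apply/subsetP => g gM.
  have [p [q [a1 [a2 [a4 [h1 h2 h4 e]]]]]] := dec _ (inS1 g gM).
  case: e => e1 e2 _ _.
  have ep : p = a1^-1 by rewrite -(mulgK a1 p) -e1 mul1g.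
  by rewrite e2 ep mem_mulg ?groupV.
pose H := (psi @* D)%G.
have sHA3 : H \subset A3 by rewrite -imA morphimS // subsetIr.
have cH : #|H| = #|D| by rewrite card_injm // subsetIr.
have eH4 : H * A4 = M12.
  apply/eqP; rewrite eqEsubset mul_subG ?(subset_trans sHA3) //; apply/subsetP => g gM.
  have [p [q [a1 [a2 [a4 [h1 h2 h4 e]]]]]] := dec _ (inS2 g gM).
  case: e => e1 e2 e3 e4.
  have ep : p = a1^-1 by rewrite -(mulgK a1 p) -e1 mul1g.
  have ep2 : p = a2^-1 by rewrite -(mulgK a2 p) -e2 mul1g.
  have ea : a1 = a2 by apply: invg_inj; rewrite -ep -ep2.
  have eq : q = psi (a2^-1) by rewrite morphV // -(mulgK (psi a2) q) -e3 mul1g.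
  rewrite e4 eq; apply: mem_mulg => //.
  apply: mem_morphim; first by rewrite groupV.
  by rewrite inE !groupV h2 -ea h1.
have e34 : A3 * A4 = M12.
  apply/eqP; rewrite eqEsubset mul_subG // -{1}eH4 mulSg //.
pose K := (A3 :&: A4)%G.
have cD : #|D| = 660.
  have := mul_cardG A1 A2; rewrite e12 card_M12 cA1 cA2 => /canc.
  rewrite mA => /(_ isT) h; apply: div12; rewrite -h; by [].
have cK : #|K| = 660.
  have := mul_cardG A3 A4; rewrite e34 card_M12 cA3 cA4 => /canc.
  rewrite mA => /(_ isT) h; apply: div12; rewrite -h; by [].
have cHK : #|H :&: K| = 55.
  have := mul_cardG H A4; rewrite eH4 card_M12 cA4 cH cD mulnC => /canc.
  rewrite mA => /(_ isT) h.
  have -> : H :&: K = H :&: A4 by rewrite /K setIA (setIidPl sHA3).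
  by apply: div12; rewrite -h.
have [f injf imf] := isogP iA3.
have sKA3 : K \subset A3 by rewrite subsetIl.
apply: (@M11_no_pair (f @* H)%G (f @* K)%G).
- by rewrite -imf morphimS.
- by rewrite -imf morphimS.
- by rewrite card_injm // cH.
- by rewrite card_injm.
- rewrite -injmI // card_injm //; exact: subset_trans (subsetIl _ _) sHA3.
Qed.
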